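(* Let $R$ be a commutative ring with identity, $M$ an $R$-module, $a\in R$, and $\mathfrak{a}=aR$ the ideal of $R$ generated by $a$. The following statements are equivalent: (1) $M$ is $a$-reduced; (2) $a\Gamma_{a}(M)=0$; (3) $(0:_M a)=(0:_M a^{k})$ for all $k\in\mathbb{Z}^{+}$; (4) $\varinjlim_{k}\operatorname{Hom}_R(R/\mathfrak{a}^{k},M)\cong \operatorname{Hom}_R(R/\mathfrak{a},M)$; (5) $\Gamma_{a}(M)\cong \operatorname{Hom}_R(R/\mathfrak{a},M)$; (6) $0\to \Gamma_{a}(M)\to M\to aM\to 0$ is a short exact sequence, where the first map is the inclusion and the second is $m\mapsto am$.
   Context: All rings are commutative with identity. For an $R$-module $M$ and $a\in R$: $M$ is called $a$-reduced if for all $m\in M$, $a^{2}m=0$ implies $am=0$. $\Gamma_{a}(M)=\{m\in M \mid a^{k}m=0 \text{ for some } k\in\mathbb{Z}^{+}\}$, and $a\Gamma_{a}(M)=\{am \mid m\in M,\ a^{k}m=0 \text{ for some } k\in\mathbb{Z}^{+}\}$. For $k\in\mathbb{Z}^+$, $(0:_M a^{k})=\{m\in M\mid a^{k}m=0\}$. The direct limit in (4) is over the natural maps induced by the surjections $R/\mathfrak{a}^{k+1}\to R/\mathfrak{a}^{k}$. *)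

(* Defs.v *)
From HB Require Import structures.
From mathcomp Require Import all_boot all_algebra.

Set Implicit Arguments.
Unset Strict Implicit.
Unset Printing Implicit Defensive.

Import GRing.Theory.
Local Open Scope ring_scope.

Section ModuleNotions.
Variables (R : comNzRingType) (M : lmodType R).

Definition a_reduced (a : R) : Prop :=
  forall m : M, a ^+ 2 *: m = 0 -> a *: m = 0.

Definition Gamma (a : R) : M -> Prop :=
  fun m => exists k : nat, (0 < k)%N /\ a ^+ k *: m = 0.

Definition aGamma (a : R) : M -> Prop :=
  fun x => exists m, Gamma a m /\ x = a *: m.

Definition aM (a : R) : M -> Prop := fun x => exists m : M, x = a *: m.

Definition annM (a : R) (k : nat) : M -> Prop := fun m => a ^+ k *: m = 0.

(* the ideal a^k R = (aR)^k *)
Definition ideal_pow (a : R) (k : nat) : R -> Prop :=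
  fun x => exists r : R, x = a ^+ k * r.

(* Hom_R(R/I, M), represented (via composition with the canonical
   projection R -> R/I) as the R-linear maps f : R -> M vanishing on I.
   Its R-module structure is pointwise (fadd, fscl below). *)
Definition HomQ (I : R -> Prop) : (R -> M) -> Prop :=
  fun f => (forall x y, f (x + y) = f x + f y) /\
           (forall r x, f (r * x) = r *: f x) /\
           (forall x, I x -> f x = 0).

Definition fadd (f g : R -> M) : R -> M := fun x => f x + g x.
Definition fscl (r : R) (f : R -> M) : R -> M := fun x => r *: f x.

(* Transition map Hom_R(R/a^k, M) -> Hom_R(R/a^(k+1), M) induced by the
   surjection R/a^(k+1) -> R/a^k.  Under the above representation
   (fbar |-> fbar \o proj), the map fbar |-> fbar \o pi_{k+1,k} becomes the
   identity, since (fbar \o pi_{k+1,k}) \o proj_{k+1} = fbar \o proj_k. *)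
Definition hom_trans (k : nat) (f : R -> M) : R -> M := f.

Definition hom_system (a : R) (k : nat) : (R -> M) -> Prop :=
  fun f => (0 < k)%N /\ HomQ (ideal_pow a k) f.

End ModuleNotions.

(* Direct limit of a nat-indexed direct system of modules, all carried  *)
(* by subsets S k of one ambient type X with module operations addX,    *)
(* sclX, and transition maps t k : S k -> S (k+1).  Standard explicit    *)
(* construction: pairs (k, x) with x in S k, modulo                      *)
(* (k,x) ~ (l,y) iff they agree after pushing to some common index.     *)
Section DirectLimit.
Variables (R : Type) (X : Type) (addX : X -> X -> X) (sclX : R -> X -> X).
Variables (S : nat -> X -> Prop) (t : nat -> X -> X).

Fixpoint push_up (k d : nat) (x : X) : X :=
  match d with
  | 0 => x
  | d'.+1 => t (k + d') (push_up k d' x)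
  end.

Definition transport (k n : nat) (x : X) : X := push_up k (n - k) x.

Definition dl_carrier : nat * X -> Prop := fun p => S p.1 p.2.

Definition dl_eq (p q : nat * X) : Prop :=
  exists n, (p.1 <= n)%N /\ (q.1 <= n)%N /\
            transport p.1 n p.2 = transport q.1 n q.2.

Definition dl_add (p q : nat * X) : nat * X :=
  let n := maxn p.1 q.1 in (n, addX (transport p.1 n p.2) (transport q.1 n q.2)).

Definition dl_scl (r : R) (p : nat * X) : nat * X := (p.1, sclX r p.2).

End DirectLimit.

(* phi is an R-module isomorphism from (A / eqX) onto B, where A, B are  *)
(* modules carried by subsets of ambient types with the given operations *)
Definition sub_iso (R X Y : Type)
  (A : X -> Prop) (eqX : X -> X -> Prop) (addX : X -> X -> X) (sclX : R -> X -> X)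
  (B : Y -> Prop) (addY : Y -> Y -> Y) (sclY : R -> Y -> Y) (phi : X -> Y) : Prop :=
  (forall x, A x -> B (phi x)) /\
  (forall x y, A x -> A y -> eqX x y -> phi x = phi y) /\
  (forall x y, A x -> A y -> phi (addX x y) = addY (phi x) (phi y)) /\
  (forall r x, A x -> phi (sclX r x) = sclY r (phi x)) /\
  (forall x y, A x -> A y -> phi x = phi y -> eqX x y) /\
  (forall y, B y -> exists2 x, A x & phi x = y).

Definition short_exact (X Y Z : zmodType)
  (A : X -> Prop) (B : Y -> Prop) (C : Z -> Prop) (i : X -> Y) (p : Y -> Z) : Prop :=
  [/\ (forall x, A x -> B (i x)),
      (forall y, B y -> C (p y)),
      (forall x x', A x -> A x' -> i x = i x' -> x = x'),
      (forall y, B y -> (p y = 0 <-> exists2 x, A x & i x = y)) &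
      (forall z, C z -> exists2 y, B y & p y = z)].

(* Main.v *)
Require Import Defs.
From HB Require Import structures.
From mathcomp Require Import all_boot all_algebra.
From Stdlib Require Import FunctionalExtensionality.
Import GRing.Theory.
Local Open Scope ring_scope.

Section Aux.
Variables (R : comNzRingType) (M : lmodType R) (a : R).

Definition PP := forall m : M, Gamma a m -> a *: m = 0.

Lemma push_up_id k d (f : R -> M) : push_up (@hom_trans R M) k d f = f.
Proof. by elim: d => //= d IH; rewrite /hom_trans IH. Qed.

Lemma transport_id k n (f : R -> M) : transport (@hom_trans R M) k n f = f.
Proof. exact: push_up_id. Qed.

Lemma HomQ_scl I r (f : R -> M) : HomQ I f -> HomQ I (fscl r f).
Proof.
case=> [hD [hZ hI]]; split; [|split] => [x y|s x|x Ix]; rewrite /fscl.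
- by rewrite hD scalerDr.
- by rewrite hZ !scalerA mulrC.
- by rewrite hI // scaler0.
Qed.

Lemma HomQ_a_kill (g : R -> M) x : HomQ (ideal_pow a 1) g -> a *: g x = 0.
Proof.
case=> [_ [hZ hI]]; rewrite -hZ; apply: hI; exists x; by rewrite expr1.
Qed.

Lemma HomQ_lin (I : R -> Prop) (g : R -> M) x : HomQ I g -> g x = x *: g 1.
Proof. by case=> [_ [hZ _]]; rewrite -hZ mulr1. Qed.

Lemma mul_HomQ k (m : M) : a ^+ k *: m = 0 ->
  HomQ (ideal_pow a k) (fun x => x *: m).
Proof.
move=> hm; split; [|split] => [x y|r x|x [r ->]].
- by rewrite scalerDl.
- by rewrite scalerA.
- by rewrite mulrC -scalerA hm scaler0.
Qed.

Lemma e1 : @a_reduced R M a <-> PP.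
Proof.
split=> [H m [k [k0 hk]]|H m hm].
- elim: k k0 m hk => // k IH _ m hk.
  case: k IH hk => [_|k IH hk]; first by rewrite expr1.
  apply: H; rewrite expr2 -scalerA; apply: IH => //.
  by rewrite scalerA -exprSr.
- by apply: H; exists 2%N.
Qed.

Lemma e2 : (forall x : M, @aGamma R M a x <-> x = 0) <-> PP.
Proof.
split=> [H m hm|H x].
- by apply/H; exists m.
- split=> [[m [hm ->]]|->]; first exact: H.
  exists 0; split; last by rewrite scaler0.
  by exists 1%N; rewrite scaler0.
Qed.

Lemma e3 : (forall k : nat, (0 < k)%N -> forall m : M, @annM R M a 1 m <-> @annM R M a k m) <-> PP.
Proof.
rewrite /annM; split=> [H m [k [k0 hk]]|H k k0 m].
- by rewrite -[a]expr1; apply/(H k k0).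
- split=> hm.
  + case: k k0 => // k _; by rewrite exprSr -scalerA -[a]expr1 hm scaler0.
  + by rewrite expr1; apply: H; exists k.
Qed.

Lemma e4 : (exists phi : nat * (R -> M) -> (R -> M),
      sub_iso (dl_carrier (@hom_system R M a))
              (dl_eq (@hom_trans R M))
              (dl_add (@fadd R M) (@hom_trans R M))
              (dl_scl (@fscl R M))
              (@HomQ R M (ideal_pow a 1)) (@fadd R M) (@fscl R M) phi) <-> PP.
Proof.
split.
- case=> phi [hB [_ [_ [hS [hInj _]]]]] m [k [k0 hk]].
  set f := fun x : R => x *: m.
  have Cf : dl_carrier (@hom_system R M a) (k, f) by split => //; exact: mul_HomQ.
  have Cs : forall r, dl_carrier (@hom_system R M a) (k, fscl r f).
    by move=> r; split => //; apply: HomQ_scl; exact: mul_HomQ.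
  have e : phi (k, fscl a f) = phi (k, fscl 0 f).
    rewrite (hS a (k, f) Cf) (hS 0 (k, f) Cf); apply: functional_extensionality => x.
    rewrite /fscl scale0r; apply: HomQ_a_kill; exact: hB.
  have [n [_ [_ /=]]] := hInj _ _ (Cs a) (Cs 0) e.
  rewrite !transport_id => /(congr1 (fun g => g 1)).
  by rewrite /fscl /f scale1r scale0r.
- move=> H; exists snd; split; [|split; [|split; [|split; [|split]]]].
  + case=> k f [/= k0 hf]; have hf' := hf; case: hf' => [hD [hZ hI]].
    split; [|split] => // x [r ->]; rewrite (HomQ_lin _ _ _ hf) expr1 mulrC -scalerA.
    rewrite H ?scaler0 //; exists k; split => //.
    rewrite -(HomQ_lin _ _ _ hf); apply: hI; exists 1; by rewrite mulr1.
  + by case=> k f [l g] _ _ [n [_ [_ /=]]]; rewrite !transport_id.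
  + by case=> k f [l g] _ _ /=; rewrite !transport_id.
  + by [].
  + move=> [k f] [l g] _ _ /= <-; exists (maxn k l); by rewrite /= !transport_id leq_maxl leq_maxr.
  + by move=> y hy; exists (1%N, y).
Qed.

Lemma e5 : (exists psi : M -> (R -> M),
      sub_iso (@Gamma R M a) (fun x y : M => x = y) (fun x y : M => x + y)
              (fun (r : R) (m : M) => r *: m)
              (@HomQ R M (ideal_pow a 1)) (@fadd R M) (@fscl R M) psi) <-> PP.
Proof.
split.
- case=> psi [hB [_ [_ [hS [hInj _]]]]] m hm.
  have [k [k0 hk]] := hm.
  have Ga : Gamma a (a *: m).
    by exists k; split => //; rewrite scalerA -exprSr exprS -scalerA hk scaler0.
  have G0 : Gamma a (0 *: m) by exists k; split => //; rewrite scale0r scaler0.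
  rewrite -(scale0r m); apply: hInj => //.
  rewrite (hS a m hm) (hS 0 m hm); apply: functional_extensionality => x.
  rewrite /fscl scale0r; apply: HomQ_a_kill; exact: hB.
- move=> H; exists (fun m x => x *: m); split; [|split; [|split; [|split; [|split]]]].
  + move=> m hm; apply: mul_HomQ; rewrite expr1; exact: H.
  + by move=> x y _ _ ->.
  + move=> x y _ _; apply: functional_extensionality => z.
    by rewrite /fadd scalerDr.
  + move=> r x _; apply: functional_extensionality => z.
    by rewrite /fscl !scalerA mulrC.
  + by move=> x y _ _ /(congr1 (fun g => g 1)); rewrite !scale1r.
  + move=> g hg; exists (g 1).
      exists 1%N; split => //; rewrite expr1; exact: HomQ_a_kill.
    by apply: functional_extensionality => x; rewrite -(HomQ_lin _ _ _ hg).
Qed.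

Lemma e6 : @short_exact M M M (@Gamma R M a) (fun _ : M => True) (@aM R M a)
                (fun m : M => m) (fun m : M => a *: m) <-> PP.
Proof.
split.
- case=> _ _ _ h _ m hm; apply/(h m) => //; by exists m.
- move=> H; split => //.
  + by move=> y _; exists y.
  + move=> y _; split=> [hy|[x hx <-]]; last exact: H.
    by exists y => //; exists 1%N; rewrite expr1.
  + by move=> z [m ->]; exists m.
Qed.

End Aux.

Theorem mainTheorem1 (R : comNzRingType) (M : lmodType R) (a : R) :
  [<->
   (* (1) M is a-reduced *)
   @a_reduced R M a;
   (* (2) a Gamma_a(M) = 0 *)
   (forall x : M, @aGamma R M a x <-> x = 0);
   (* (3) (0 :_M a) = (0 :_M a^k) for all k in Z^+ *)
   (forall k : nat, (0 < k)%N -> forall m : M, @annM R M a 1 m <-> @annM R M a k m);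
   (* (4) lim_k Hom_R(R/a^k, M) ~= Hom_R(R/a, M) *)
   (exists phi : nat * (R -> M) -> (R -> M),
      sub_iso (dl_carrier (@hom_system R M a))
              (dl_eq (@hom_trans R M))
              (dl_add (@fadd R M) (@hom_trans R M))
              (dl_scl (@fscl R M))
              (@HomQ R M (ideal_pow a 1)) (@fadd R M) (@fscl R M) phi);
   (* (5) Gamma_a(M) ~= Hom_R(R/a, M) *)
   (exists psi : M -> (R -> M),
      sub_iso (@Gamma R M a) (fun x y : M => x = y) (fun x y : M => x + y)
              (fun (r : R) (m : M) => r *: m)
              (@HomQ R M (ideal_pow a 1)) (@fadd R M) (@fscl R M) psi);
   (* (6) 0 -> Gamma_a(M) -> M -> aM -> 0 is short exact *)
   @short_exact M M M (@Gamma R M a) (fun _ : M => True) (@aM R M a)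
                (fun m : M => m) (fun m : M => a *: m)].
Proof.
have E1 := e1 R M a; have E2 := e2 R M a; have E3 := e3 R M a.
have E4 := e4 R M a; have E5 := e5 R M a; have E6 := e6 R M a.
tfae => H.
- by apply/E2; apply/E1.
- by apply/E3; apply/E2.
- by apply/E4; apply/E3.
- by apply/E5; apply/E4.
- by apply/E6; apply/E5.
- by apply/E1; apply/E6.
Qed.
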